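(* Fix $(\sigma_s,\mu)\in\mathbb{R}^2$ and $\delta\in(0,1/8)$. For $-1/2<\operatorname{Im} t<1/2$ let $$f(t) = -\frac{\operatorname{Li}_2(-e^{2 \pi \mu }) + \operatorname{Li}_2(-e^{2 \pi (t-\sigma_s)}) + \operatorname{Li}_2(-e^{2 \pi(t+\sigma_s)})}{2 \pi i}+2 i \pi \mu t+\pi (t - \mu) +\frac{5 i \pi }{12},\qquad g(t) = e^{\pi (t- \mu)}.$$ Writing $t=t_1+it_2$, there are constants $C>0$ and $c>0$ such that $$\big|e^{f(t)/b^2} g(t)\big| \leq C e^{-\frac{c}{b^2}|t_1|}$$ for all sufficiently large $|t_1|$, all $t_2\in(-1/2,-1/4-\delta)$, and all sufficiently small $b>0$.
   Context: $\operatorname{Li}_2(z)=-\int_0^z\frac{\ln(1-u)}{u}du$ on $\mathbb{C}\setminus[1,\infty)$, with the principal logarithm. *)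

(* Defs.v *)
From Stdlib Require Import Reals.
From Coquelicot Require Import Coquelicot.
Open Scope R_scope.

Definition cexp (z : C) : C :=
  (exp (Re z) * cos (Im z), exp (Re z) * sin (Im z)).

(* Principal argument in (-PI, PI]: for w off the closed negative real axis
   it is 2 atan (Im w / (|w| + Re w)); on the negative real axis it is PI
   (the value at w = 0 is irrelevant). *)
Definition carg (w : C) : R :=
  if Req_EM_T (Cmod w + Re w) 0 then PI
  else 2 * atan (Im w / (Cmod w + Re w)).

Definition cln (w : C) : C := (ln (Cmod w), carg w).

(* Dilogarithm Li2 z = - int_0^z ln(1-u)/u du on C \ [1,oo), the integral
   taken along the straight segment u = s z, s in [0,1] (C \ [1,oo) is
   star-shaped w.r.t. 0, so this is the value of the path-independent
   integral): Li2 z = - int_0^1 ln(1 - s z) / s ds, split into real and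
   imaginary parts. *)
Definition Li2 (z : C) : C :=
  (- RInt (fun s => Re (cln (Cminus (RtoC 1) (Cmult (RtoC s) z))) / s) 0 1,
   - RInt (fun s => Im (cln (Cminus (RtoC 1) (Cmult (RtoC s) z))) / s) 0 1).

Definition f_fun (sig mu : R) (t : C) : C :=
  Cplus (Cplus (Cplus
    (Copp (Cdiv (Cplus (Cplus
        (Li2 (Copp (cexp (RtoC (2 * PI * mu)))))
        (Li2 (Copp (cexp (Cmult (RtoC (2 * PI)) (Cminus t (RtoC sig)))))))
        (Li2 (Copp (cexp (Cmult (RtoC (2 * PI)) (Cplus t (RtoC sig)))))))
      (Cmult (RtoC (2 * PI)) Ci)))
    (Cmult (Cmult Ci (RtoC (2 * PI * mu))) t))
    (Cmult (RtoC PI) (Cminus t (RtoC mu))))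
    (Cmult Ci (RtoC (5 * PI / 12))).

Definition g_fun (mu : R) (t : C) : C := cexp (Cmult (RtoC PI) (Cminus t (RtoC mu))).

(* Main.v *)
Require Import Defs.
From Stdlib Require Import Reals Lra Psatz.
From Coquelicot Require Import Coquelicot.
Open Scope R_scope.


Definition Aat (y : R) : R := if Req_EM_T y 0 then 1 else atan y / y.

Lemma Aat_cont0 : continuous Aat 0.
Proof.
  apply continuity_pt_filterlim.
  intros eps Heps.
  destruct (derivable_pt_lim_atan 0 eps Heps) as [d Hd].
  exists d; split; [apply cond_pos|].
  intros y [[_ Hy0] Hyd]. unfold R_dist in *. simpl in *. unfold R_dist in *.
  unfold Aat. destruct (Req_EM_T y 0) as [e|n]; [congruence|].
  destruct (Req_EM_T 0 0) as [_|n0]; [|congruence].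
  specialize (Hd y n). rewrite Rminus_0_r in Hyd.
  specialize (Hd Hyd). rewrite Rplus_0_l, atan_0, Rminus_0_r in Hd.
  replace (/ (1 + 0 * (0 * 1))) with 1 in Hd by field. exact Hd.
Qed.

Lemma Aat_cont (y0 : R) : continuous Aat y0.
Proof.
  destruct (Req_EM_T y0 0) as [->|n]; [apply Aat_cont0|].
  apply continuous_ext_loc with (fun y => atan y / y).
  - assert (Hp : 0 < Rabs y0) by (apply Rabs_pos_lt; exact n).
    exists (mkposreal _ Hp). intros y Hy. unfold Aat.
    destruct (Req_EM_T y 0) as [e|_]; [|reflexivity].
    exfalso. subst y. change (Rabs (0 - y0) < Rabs y0) in Hy.
    rewrite Rminus_0_l, Rabs_Ropp in Hy. lra.
  - apply (ex_derive_continuous (K:=R_AbsRing) (V:=R_NormedModule)). auto_derive. exact n.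
Qed.

Definition kf (ur ui x : R) : R :=
  ui / (sqrt ((1 + x*ur)^2 + (x*ui)^2) + (1 + x*ur)).
Definition gI (ur ui x : R) : R := 2 * kf ur ui x * Aat (x * kf ur ui x).

Lemma sqrt_gt_negp (p q : R) : q <> 0 -> 0 < sqrt (p^2 + q^2) + p.
Proof.
  intro hq.
  assert (Hq2 : 0 < q^2) by (simpl; rewrite Rmult_1_r; apply Rsqr_pos_lt; exact hq).
  assert (H : sqrt (p^2) < sqrt (p^2 + q^2)).
  { apply sqrt_lt_1_alt. split; [apply pow2_ge_0| lra]. }
  replace (p^2) with (Rsqr p) in H at 1 by (unfold Rsqr; ring).
  rewrite sqrt_Rsqr_abs in H.
  pose proof (Rabs_maj2 p). lra.
Qed.

Lemma D_pos (ur ui x : R) : ui < 0 -> 0 <= x ->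
  0 < (1 + x*ur)^2 + (x*ui)^2 /\ 0 < sqrt ((1 + x*ur)^2 + (x*ui)^2) + (1 + x*ur).
Proof.
  intros hu hx. destruct (Req_dec x 0) as [->|nx].
  - replace ((1 + 0*ur)^2 + (0*ui)^2) with 1 by ring. rewrite sqrt_1. lra.
  - assert (hq : x * ui <> 0) by (apply Rmult_integral_contrapositive; split; lra).
    split.
    + pose proof (pow2_ge_0 (1 + x*ur)).
      assert (0 < (x*ui)^2) by (simpl; rewrite Rmult_1_r; apply Rsqr_pos_lt; exact hq). lra.
    + apply sqrt_gt_negp; exact hq.
Qed.

Lemma gI_cont (ur ui x : R) : ui < 0 -> 0 <= x -> continuous (gI ur ui) x.
Proof.
  intros hu hx. destruct (D_pos ur ui x hu hx) as [H1 H2].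
  assert (Hk : continuous (kf ur ui) x).
  { apply (ex_derive_continuous (K:=R_AbsRing) (V:=R_NormedModule)).
    unfold kf. auto_derive. simpl in H1, H2. repeat split; lra. }
  apply continuity_pt_filterlim. unfold gI.
  apply continuity_pt_mult.
  - apply continuity_pt_mult; [apply continuity_pt_const; intros a b; reflexivity|].
    apply continuity_pt_filterlim; exact Hk.
  - apply (continuity_pt_comp (fun x => x * kf ur ui x) Aat).
    + apply continuity_pt_mult; [apply continuity_pt_id|].
      apply continuity_pt_filterlim; exact Hk.
    + apply continuity_pt_filterlim; apply Aat_cont.
Qed.

Definition FI (u : C) (s : R) : R :=
  Im (cln (Cminus (RtoC 1) (Cmult (RtoC s) (Copp u)))) / s.

Lemma line_eq (ur ui s : R) :
  Cminus (RtoC 1) (Cmult (RtoC s) (Copp (ur, ui))) = (1 + s*ur, s*ui).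
Proof.
  unfold Cminus, Cplus, Cmult, Copp, RtoC; simpl. f_equal; ring.
Qed.

Lemma carg_line (ur ui s : R) : ui < 0 -> 0 < s ->
  Im (cln (Cminus (RtoC 1) (Cmult (RtoC s) (Copp (ur, ui))))) =
  2 * atan (s * kf ur ui s).
Proof.
  intros hu hs. rewrite line_eq. unfold cln, carg, Cmod, Re, Im; cbn [fst snd].
  destruct (D_pos ur ui s hu (Rlt_le _ _ hs)) as [_ H2].
  destruct (Req_EM_T _ 0) as [e|_]; [lra|].
  unfold kf. f_equal. f_equal. field. lra.
Qed.

Lemma FI_eq (ur ui s : R) : ui < 0 -> 0 < s -> FI (ur, ui) s = gI ur ui s.
Proof.
  intros hu hs. unfold FI. rewrite carg_line by assumption.
  destruct (D_pos ur ui s hu (Rlt_le _ _ hs)) as [_ H2].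
  assert (hk : kf ur ui s <> 0).
  { unfold kf. apply Rmult_integral_contrapositive; split; [lra|].
    apply Rinv_neq_0_compat; lra. }
  unfold gI, Aat. destruct (Req_EM_T (s * kf ur ui s) 0) as [e|_].
  - exfalso. apply Rmult_integral in e. destruct e; lra.
  - field. split; lra.
Qed.

Lemma FI_int (ur ui a b : R) : ui < 0 -> 0 <= a -> a <= b -> ex_RInt (FI (ur,ui)) a b.
Proof.
  intros hu ha hab.
  apply ex_RInt_ext with (gI ur ui).
  - intros x hx. rewrite Rmin_left in hx by lra. symmetry. apply FI_eq; lra.
  - apply (ex_RInt_continuous (V:=R_CompleteNormedModule)). intros z hz. rewrite Rmin_left in hz by lra.
    apply gI_cont; lra.
Qed.

Lemma FI_form (ur ui s : R) : ui < 0 -> 0 < s ->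
  FI (ur, ui) s = 2 * atan (s * ui / (sqrt ((1 + s*ur)^2 + (s*ui)^2) + (1 + s*ur))) / s.
Proof.
  intros hu hs. unfold FI. rewrite carg_line by assumption. unfold kf.
  destruct (D_pos ur ui s hu (Rlt_le _ _ hs)) as [_ H2].
  f_equal. f_equal. f_equal. field. lra.
Qed.

Lemma FI_nonpos (ur ui s : R) : ui < 0 -> 0 < s -> FI (ur, ui) s <= 0.
Proof.
  intros hu hs. rewrite FI_form by assumption.
  destruct (D_pos ur ui s hu (Rlt_le _ _ hs)) as [_ H2].
  set (D := sqrt _ + _) in *.
  assert (h : s * ui / D < 0).
  { unfold Rdiv. assert (0 < / D) by (apply Rinv_0_lt_compat; lra).
    assert (s * ui < 0) by nra. nra. }
  apply atan_increasing in h. rewrite atan_0 in h.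
  unfold Rdiv. assert (0 < / s) by (apply Rinv_0_lt_compat; lra). nra.
Qed.

Lemma FI_le (ur ui s T : R) : ui < 0 -> 0 < s -> 1 < T ->
  1 + s * ur <= (T^2 - 1) / (2*T) * (s * ui) ->
  FI (ur, ui) s <= - 2 * atan T / s.
Proof.
  intros hu hs hT hc. rewrite FI_form by assumption.
  destruct (D_pos ur ui s hu (Rlt_le _ _ hs)) as [H1 H2].
  set (p := 1 + s*ur) in *. set (Q := - (s * ui)).
  assert (hQ : 0 < Q) by (unfold Q; nra).
  replace (s * ui) with (-Q) in * by (unfold Q; ring).
  set (D := sqrt _ + _) in *.
  assert (hk : (T^2-1)/(2*T) * Q <= - p).
  { replace ((T ^ 2 - 1) / (2 * T) * - Q) with (- ((T ^ 2 - 1) / (2 * T) * Q)) in hc by ring. lra. }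
  assert (hkk : (T^2-1) * Q <= - p * (2*T)).
  { replace ((T^2-1) * Q) with ((T^2-1)/(2*T) * Q * (2*T)) by (field; lra).
    apply Rmult_le_compat_r; lra. }
  assert (hsq : sqrt (p^2 + (-Q)^2) <= Q / T - p).
  { assert (hY : 0 <= Q / T - p).
    { assert (0 < Q / T) by (apply Rdiv_lt_0_compat; lra).
      assert (0 <= (T^2-1)*Q) by (apply Rmult_le_pos; nra). nra. }
    rewrite <- (sqrt_pow2 (Q / T - p)) by exact hY.
    apply sqrt_le_1_alt.
    replace ((Q / T - p)^2) with (p^2 + Q^2/T^2 - 2*p*Q/T) by (field; lra).
    replace ((-Q)^2) with (Q^2) by ring.
    assert (Q^2 <= Q^2/T^2 - 2*p*Q/T); [|lra].
    replace (Q^2/T^2 - 2*p*Q/T) with ((Q^2 + (-p*(2*T))*Q)/T^2) by (field; lra).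
    apply Rmult_le_reg_r with (T^2); [nra|].
    unfold Rdiv. rewrite Rmult_assoc, Rinv_l by nra. nra. }
  assert (htau : - Q / D <= - T).
  { apply Rmult_le_reg_r with D; [lra|].
    unfold Rdiv. rewrite Rmult_assoc, Rinv_l by lra.
    unfold D. apply Rmult_le_reg_r with (/T); [apply Rinv_0_lt_compat; lra|].
    replace (- T * (sqrt (p ^ 2 + (- Q) ^ 2) + p) * / T) with (- (sqrt (p ^ 2 + (- Q) ^ 2) + p)) by (field; lra).
    unfold Rdiv in hsq. lra. }
  assert (ha : atan (- Q / D) <= - atan T).
  { rewrite <- atan_opp. destruct (Req_dec (- Q / D) (- T)) as [e|n].
    - rewrite e; lra.
    - left. apply atan_increasing. lra. }
  unfold Rdiv. assert (0 < / s) by (apply Rinv_0_lt_compat; lra).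
  replace (- 2 * atan T * / s) with (2 * (- atan T) * / s) by ring.
  apply Rmult_le_compat_r; lra.
Qed.

Lemma RInt_FI_nonpos (ur ui a b : R) : ui < 0 -> 0 <= a -> a <= b ->
  RInt (FI (ur, ui)) a b <= 0.
Proof.
  intros hu ha hab.
  replace 0 with (RInt (fun _ => 0) a b).
  - apply RInt_le; [exact hab| apply FI_int; assumption | apply ex_RInt_const |].
    intros x hx. apply FI_nonpos; lra.
  - rewrite RInt_const. unfold scal; simpl. unfold mult; simpl. ring.
Qed.

Lemma RInt_inv (beta x0 : R) : 0 < x0 -> x0 <= 1 ->
  RInt (fun s => beta / s) x0 1 = - beta * ln x0.
Proof.
  intros h0 h1.
  assert (H : is_RInt (fun s => beta / s) x0 1 (minus (beta * ln 1) (beta * ln x0))).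
  { apply (is_RInt_derive (V:=R_CompleteNormedModule) (fun s => beta * ln s)).
    - intros x hx. rewrite Rmin_left in hx by lra. rewrite Rmax_right in hx by lra.
      auto_derive; [lra|]. field. lra.
    - intros x hx. rewrite Rmin_left in hx by lra. rewrite Rmax_right in hx by lra.
      apply (ex_derive_continuous (K:=R_AbsRing) (V:=R_NormedModule)).
      auto_derive. lra. }
  apply (is_RInt_unique (V:=R_CompleteNormedModule)) in H. rewrite H. rewrite ln_1. unfold minus, plus, opp; simpl. ring.
Qed.

Lemma RInt_FI_le (ur ui T x0 : R) : ui < 0 -> 1 < T -> 0 < x0 -> x0 <= 1 ->
  (forall s, x0 <= s <= 1 -> 1 + s * ur <= (T^2 - 1) / (2*T) * (s * ui)) ->
  RInt (FI (ur, ui)) 0 1 <= 2 * atan T * ln x0.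
Proof.
  intros hu hT h0 h1 hc.
  rewrite <- (RInt_Chasles (V:=R_CompleteNormedModule) _ 0 x0 1)
    by (apply FI_int; lra).
  pose proof (RInt_FI_nonpos ur ui 0 x0 hu (Rle_refl 0) (Rlt_le _ _ h0)).
  assert (RInt (FI (ur, ui)) x0 1 <= RInt (fun s => (- 2 * atan T) / s) x0 1).
  { apply RInt_le; [exact h1| apply FI_int; lra| |].
    - apply (ex_RInt_continuous (V:=R_CompleteNormedModule)).
      intros z hz. rewrite Rmin_left in hz by lra. rewrite Rmax_right in hz by lra.
      apply (ex_derive_continuous (K:=R_AbsRing) (V:=R_NormedModule)).
      auto_derive. lra.
    - intros x hx. apply FI_le; try lra. apply hc; lra. }
  rewrite RInt_inv in H0 by assumption.
  unfold plus; simpl. lra.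
Qed.

Lemma Re_f (sig mu t1 t2 : R) :
  Re (f_fun sig mu (t1, t2)) =
  (RInt (FI (cexp (RtoC (2 * PI * mu)))) 0 1
   + RInt (FI (cexp (Cmult (RtoC (2 * PI)) (Cminus (t1, t2) (RtoC sig))))) 0 1
   + RInt (FI (cexp (Cmult (RtoC (2 * PI)) (Cplus (t1, t2) (RtoC sig))))) 0 1) / (2 * PI)
  - 2 * PI * mu * t2 + PI * (t1 - mu).
Proof.
  assert (E : forall u, snd (Li2 (Copp u)) = - RInt (FI u) 0 1) by reflexivity.
  unfold f_fun.
  set (L0 := Li2 (Copp (cexp (RtoC (2 * PI * mu))))).
  set (Lm := Li2 (Copp (cexp (Cmult (RtoC (2 * PI)) (Cminus (t1, t2) (RtoC sig)))))).
  set (Lp := Li2 (Copp (cexp (Cmult (RtoC (2 * PI)) (Cplus (t1, t2) (RtoC sig)))))).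
  assert (E0 : snd L0 = - RInt (FI (cexp (RtoC (2 * PI * mu)))) 0 1) by apply E.
  assert (Em : snd Lm = - RInt (FI (cexp (Cmult (RtoC (2 * PI)) (Cminus (t1, t2) (RtoC sig))))) 0 1) by apply E.
  assert (Ep : snd Lp = - RInt (FI (cexp (Cmult (RtoC (2 * PI)) (Cplus (t1, t2) (RtoC sig))))) 0 1) by apply E.
  clearbody L0 Lm Lp.
  destruct L0 as [a0 b0], Lm as [am bm], Lp as [ap bp]. cbn [snd] in E0, Em, Ep.
  assert (R0 : RInt (FI (cexp (RtoC (2 * PI * mu)))) 0 1 = - b0) by lra.
  assert (Rm : RInt (FI (cexp (Cmult (RtoC (2 * PI)) (Cminus (t1, t2) (RtoC sig))))) 0 1 = - bm) by lra.
  assert (Rp : RInt (FI (cexp (Cmult (RtoC (2 * PI)) (Cplus (t1, t2) (RtoC sig))))) 0 1 = - bp) by lra.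
  rewrite R0, Rm, Rp. clear.
  unfold Cminus, Cdiv, Cplus, Cmult, Copp, Cinv, RtoC, Ci, Re. cbn [fst snd].
  assert (PI <> 0) by (pose proof PI_RGT_0; lra).
  field. auto.
Qed.

Lemma FI_real0 (a s : R) : 0 <= a -> 0 <= s -> FI (a, 0) s = 0.
Proof.
  intros ha hs. unfold FI. rewrite line_eq.
  unfold cln, carg, Cmod, Re, Im; cbn [fst snd].
  destruct (Req_EM_T _ 0) as [e|_].
  - exfalso. assert (0 <= sqrt ((1 + s * a) ^ 2 + (s * 0) ^ 2)) by apply sqrt_pos. nra.
  - replace (s * 0 / (sqrt ((1 + s * a) ^ 2 + (s * 0) ^ 2) + (1 + s * a))) with 0
      by (unfold Rdiv; ring). rewrite atan_0. unfold Rdiv. ring.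
Qed.

Lemma RInt_u0 (mu : R) : RInt (FI (cexp (RtoC (2 * PI * mu)))) 0 1 = 0.
Proof.
  unfold cexp, RtoC, Re, Im; cbn [fst snd]. rewrite sin_0, cos_0, Rmult_0_r, Rmult_1_r.
  rewrite (RInt_ext _ (fun _ => 0)).
  - rewrite RInt_const. unfold scal; simpl. unfold mult; simpl. ring.
  - intros x hx. rewrite Rmin_left in hx by lra. apply FI_real0; [left; apply exp_pos| lra].
Qed.

Lemma trig_facts (delta t2 : R) : 0 < delta -> delta < 1/8 ->
  -1/2 < t2 -> t2 < -1/4 - delta ->
  sin (2*PI*t2) < 0 /\ cos (2*PI*t2) <= - sin (2*PI*delta) /\ 0 < sin (2*PI*delta).
Proof.
  intros h0 h1 h2 h3. pose proof PI_RGT_0 as hp.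
  split; [|split].
  - replace (2*PI*t2) with (- (2*PI*(-t2))) by ring. rewrite sin_neg.
    assert (0 < sin (2*PI*(-t2))); [|lra]. apply sin_gt_0; nra.
  - rewrite <- cos_neg. rewrite (sin_cos (2*PI*delta)).
    rewrite Ropp_involutive. left. apply cos_decreasing_1; nra.
  - apply sin_gt_0; nra.
Qed.

Lemma cexp_line (t1 t2 s : R) :
  cexp (Cmult (RtoC (2 * PI)) (Cminus (t1, t2) (RtoC s))) =
  (exp (2*PI*(t1 - s)) * cos (2*PI*t2), exp (2*PI*(t1 - s)) * sin (2*PI*t2)).
Proof.
  unfold cexp, Cmult, Cminus, Cplus, Copp, RtoC, Re, Im; cbn [fst snd].
  f_equal; f_equal; f_equal; ring.
Qed.

Lemma cexp_line' (t1 t2 s : R) :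
  cexp (Cmult (RtoC (2 * PI)) (Cplus (t1, t2) (RtoC s))) =
  (exp (2*PI*(t1 - - s)) * cos (2*PI*t2), exp (2*PI*(t1 - - s)) * sin (2*PI*t2)).
Proof.
  unfold cexp, Cmult, Cminus, Cplus, Copp, RtoC, Re, Im; cbn [fst snd].
  f_equal; f_equal; f_equal; ring.
Qed.

Lemma Cmod_cexp (z : C) : Cmod (cexp z) = exp (Re z).
Proof.
  unfold Cmod, cexp; cbn [fst snd].
  replace ((exp (Re z) * cos (Im z)) ^ 2 + (exp (Re z) * sin (Im z)) ^ 2)
    with (exp (Re z) ^ 2 * ((sin (Im z))^2 + (cos (Im z))^2)) by ring.
  rewrite <- !Rsqr_pow2, sin2_cos2, Rmult_1_r. rewrite Rsqr_pow2.
  apply sqrt_pow2. left; apply exp_pos.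
Qed.

Lemma Re_div (z : C) (r : R) : r <> 0 -> Re (Cdiv z (RtoC r)) = Re z / r.
Proof.
  intro h. destruct z as [x y].
  unfold Cdiv, Cmult, Cinv, RtoC, Re; cbn [fst snd]. field. auto.
Qed.

Lemma Re_g (mu t1 t2 : R) : Re (Cmult (RtoC PI) (Cminus (t1, t2) (RtoC mu))) = PI * (t1 - mu).
Proof. unfold Cmult, Cminus, Cplus, Copp, RtoC, Re; cbn [fst snd]. ring. Qed.

Lemma cond_lemma (c s sa r k : R) : 0 < sa -> c <= - sa -> -1 <= s -> s < 0 ->
  0 <= k -> k <= sa / 2 -> 2 / sa <= r -> 1 + r * c <= k * (r * s).
Proof.
  intros hsa hc hs1 hs0 hk0 hk1 hr.
  assert (hr2 : 2 <= r * sa).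
  { assert (h : 2 / sa * sa <= r * sa) by (apply Rmult_le_compat_r; lra).
    replace (2 / sa * sa) with 2 in h by (field; lra). lra. }
  assert (hr0 : 0 < r) by nra.
  assert (h1 : 0 <= r * (- sa - c)) by (apply Rmult_le_pos; lra).
  assert (h2 : 0 <= k * r * (s + 1)) by (apply Rmult_le_pos; [apply Rmult_le_pos|]; lra).
  assert (h3 : 0 <= (sa / 2 - k) * r) by (apply Rmult_le_pos; lra).
  assert (e1 : k * (r * s) = k * r * (s + 1) - k * r) by ring.
  assert (e2 : r * (- sa - c) = - (r * sa) - r * c) by ring.
  assert (e3 : (sa / 2 - k) * r = (r * sa) / 2 - k * r) by field.
  lra.
Qed.

Lemma mu_bound (mu t2 : R) : -1/2 < t2 -> t2 < 0 -> - 2 * PI * mu * t2 <= PI * Rabs mu.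
Proof.
  intros h1 h2. pose proof PI_RGT_0.
  destruct (Rle_or_lt 0 mu).
  - rewrite Rabs_pos_eq by lra.
    assert (0 <= PI * mu * (1 + 2 * t2)) by (apply Rmult_le_pos; [apply Rmult_le_pos|]; lra). nra.
  - rewrite Rabs_left by lra.
    assert (0 <= PI * (-mu) * (- t2)) by (apply Rmult_le_pos; [apply Rmult_le_pos|]; lra). nra.
Qed.

Lemma exp_mono (x y : R) : x <= y -> exp x <= exp y.
Proof. intros [h|h]; [left; apply exp_increasing; exact h| rewrite h; lra]. Qed.

Lemma big_bound (sa A T0 c s Em : R) : 0 < sa -> T0 = 1 + sa / 3 -> A = atan T0 ->
  c <= - sa -> -1 <= s -> s < 0 -> 0 < Em -> 2 / sa <= Em ->
  RInt (FI (Em * c, Em * s)) 0 1 <= 2 * A * (ln (2 / sa) - ln Em).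
Proof.
  intros hsa hT hA hc hs1 hs0 hE hKE.
  assert (hK : 0 < 2 / sa) by (apply Rdiv_lt_0_compat; lra).
  assert (hT1 : 1 < T0) by lra.
  assert (hk0 : 0 <= (T0^2 - 1) / (2*T0)).
  { apply Rdiv_le_0_compat; nra. }
  assert (hk1 : (T0^2 - 1) / (2*T0) <= sa / 2).
  { replace ((T0^2 - 1) / (2*T0)) with (sa/2 - (sa/3 + 2*sa^2/9)/(2*T0)) by (subst; field; lra).
    assert (0 <= (sa/3 + 2*sa^2/9)/(2*T0)) by (apply Rdiv_le_0_compat; nra). lra. }
  replace (ln (2 / sa) - ln Em) with (ln (2 / sa / Em)).
  2:{ change (2 / sa / Em) with (2 / sa * / Em).
        rewrite (ln_mult (2/sa) (/Em)), ln_Rinv; try lra. apply Rinv_0_lt_compat; lra. }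
  rewrite hA.
  apply RInt_FI_le.
  - nra.
  - exact hT1.
  - apply Rdiv_lt_0_compat; lra.
  - apply Rmult_le_reg_r with Em; [lra|]. unfold Rdiv. rewrite Rmult_assoc, Rinv_l by lra. lra.
  - intros s0 [hs01 hs02].
    assert (hr : 2 / sa <= s0 * Em).
    { apply Rmult_le_compat_r with (r := Em) in hs01; [|lra].
      replace (2 / sa / Em * Em) with (2 / sa) in hs01 by (field; lra). exact hs01. }
    replace (s0 * (Em * c)) with ((s0 * Em) * c) by ring.
    replace (s0 * (Em * s)) with ((s0 * Em) * s) by ring.
    apply (cond_lemma c s sa); assumption.
Qed.

Theorem lemma5p1 (sig mu delta : R) (hd0 : 0 < delta) (hd1 : delta < 1 / 8) :
  exists C0 c : R, 0 < C0 /\ 0 < c /\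
  exists T b0 : R, 0 < b0 /\
  forall t1 t2 b : R,
    T < Rabs t1 ->
    -1/2 < t2 -> t2 < -1/4 - delta ->
    0 < b -> b < b0 ->
    Cmod (Cmult (cexp (Cdiv (f_fun sig mu (t1, t2)) (RtoC (b ^ 2))))
                (g_fun mu (t1, t2)))
      <= C0 * exp (- (c / b ^ 2) * Rabs t1).
Proof.
  pose proof PI_RGT_0 as hpi.
  set (sa := sin (2*PI*delta)).
  assert (hsa : 0 < sa).
  { destruct (trig_facts delta (-3/8 - delta/2)) as [_ [_ h]]; try lra. exact h. }
  set (T0 := 1 + sa / 3).
  set (A := atan T0).
  assert (hA1 : PI / 4 < A).
  { rewrite <- atan_1. apply atan_increasing. unfold T0; lra. }
  assert (hA2 : A < PI / 2) by apply atan_bound.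
  set (g := 4 * A - PI).
  assert (hg : 0 < g) by (unfold g; lra).
  assert (hg2 : g < PI) by (unfold g; lra).
  set (K := 2 / sa).
  set (M := 2 * A * ln K / PI + 2 * PI * Rabs mu).
  set (Tt := 4 * (Rabs M + PI * Rabs mu) / g + Rabs sig + Rabs (ln K) / (2 * PI) + 6 * Rabs mu).
  set (b0 := Rmin 1 (g / (4 * PI))).
  exists 1, (g / 2). split; [lra|]. split; [lra|].
  exists Tt, b0. split.
  { unfold b0. apply Rmin_glb_lt; [lra|]. apply Rdiv_lt_0_compat; lra. }
  intros t1 t2 b hT h2a h2b hb hbb.
  assert (hb1 : b < 1) by (apply Rlt_le_trans with b0; [exact hbb| apply Rmin_l]).
  assert (hbg : b < g / (4 * PI)) by (apply Rlt_le_trans with b0; [exact hbb| apply Rmin_r]).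
  assert (hb2 : b ^ 2 <= b) by nra.
  assert (hb2p : 0 < b ^ 2) by nra.
  assert (hb2g : b ^ 2 * PI <= g / 4).
  { assert (b * PI < g / (4 * PI) * PI) by (apply Rmult_lt_compat_r; lra).
    replace (g / (4 * PI) * PI) with (g / 4) in H by (field; lra). nra. }
  rewrite Cmod_mult. unfold g_fun. rewrite !Cmod_cexp.
  rewrite Re_div by lra. rewrite Re_f, Re_g, RInt_u0.
  rewrite cexp_line, cexp_line'.
  destruct (trig_facts delta t2 hd0 hd1 h2a h2b) as [hs [hc _]]. fold sa in hc.
  pose proof (SIN_bound (2*PI*t2)) as [hs1 _].
  set (c := cos (2 * PI * t2)) in *. set (s := sin (2 * PI * t2)) in *.
  set (Em := exp (2 * PI * (t1 - sig))). set (Ep := exp (2 * PI * (t1 - - sig))).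
  assert (hEm : 0 < Em) by apply exp_pos. assert (hEp : 0 < Ep) by apply exp_pos.
  set (Rm := RInt (FI (Em * c, Em * s)) 0 1).
  set (Rp := RInt (FI (Ep * c, Ep * s)) 0 1).
  set (Ref := (0 + Rm + Rp) / (2 * PI) - 2 * PI * mu * t2 + PI * (t1 - mu)).
  assert (hmu : - 2 * PI * mu * t2 <= PI * Rabs mu) by (apply mu_bound; lra).
  assert (hmu2 : - (PI * mu) <= PI * Rabs mu).
  { pose proof (Rabs_maj2 mu). nra. }
  assert (hmu3 : - (b^2 * PI * mu) <= PI * Rabs mu).
  { pose proof (Rabs_maj2 mu). pose proof (Rabs_pos mu).
    assert (0 <= (1 - b^2) * PI * Rabs mu) by (apply Rmult_le_pos; [apply Rmult_le_pos|]; lra).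
    assert (0 <= b^2 * PI * (Rabs mu + mu)) by (apply Rmult_le_pos; [apply Rmult_le_pos|]; lra).
    nra. }
  assert (key : Ref + b^2 * (PI * (t1 - mu)) <= - (g / 2) * Rabs t1).
  { assert (hT0 : 0 <= 4 * (Rabs M + PI * Rabs mu) / g).
    { apply Rdiv_le_0_compat; [|lra]. pose proof (Rabs_pos M); pose proof (Rabs_pos mu). nra. }
    assert (hT1 : 0 <= Rabs (ln K) / (2 * PI)) by (apply Rdiv_le_0_compat; [apply Rabs_pos|lra]).
    pose proof (Rabs_pos sig). pose proof (Rabs_pos mu).
    assert (hRef0 : Ref <= (Rm + Rp) / (2 * PI) + PI * t1 + 2 * PI * Rabs mu).
    { unfold Ref. replace ((0 + Rm + Rp) / (2 * PI)) with ((Rm + Rp) / (2 * PI)) by (field; lra). lra. }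
    destruct (Rle_or_lt 0 t1) as [ht|ht].
    - rewrite Rabs_pos_eq in hT |- * by exact ht.
      assert (hlK : ln K <= 2 * PI * (t1 - sig) /\ ln K <= 2 * PI * (t1 - - sig)).
      { pose proof (Rle_abs (ln K)). pose proof (Rle_abs sig). pose proof (Rabs_maj2 sig).
        assert (h : Rabs (ln K) <= 2 * PI * (t1 - Rabs sig)).
        { assert (hh : Rabs (ln K) / (2 * PI) <= t1 - Rabs sig) by (unfold Tt in hT; lra).
          assert (hh2 : Rabs (ln K) / (2 * PI) * (2 * PI) <= (t1 - Rabs sig) * (2 * PI))
            by (apply Rmult_le_compat_r; lra).
          replace (Rabs (ln K) / (2 * PI) * (2 * PI)) with (Rabs (ln K)) in hh2 by (field; lra). lra. }
        split; nra. }
      assert (hKm : 2 / sa <= Em).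
      { fold K. rewrite <- (exp_ln K) by (unfold K; apply Rdiv_lt_0_compat; lra).
        apply exp_mono; tauto. }
      assert (hKp : 2 / sa <= Ep).
      { fold K. rewrite <- (exp_ln K) by (unfold K; apply Rdiv_lt_0_compat; lra).
        apply exp_mono; tauto. }
      assert (hRm := big_bound sa A T0 c s Em hsa eq_refl eq_refl hc hs1 hs hEm hKm).
      assert (hRp := big_bound sa A T0 c s Ep hsa eq_refl eq_refl hc hs1 hs hEp hKp).
      fold Rm in hRm. fold Rp in hRp. fold K in hRm, hRp.
      unfold Em in hRm. unfold Ep in hRp. rewrite ln_exp in hRm, hRp.
      assert (hsum : (Rm + Rp) / (2 * PI) <= 2 * A * ln K / PI - 4 * A * t1).
      { replace (2 * A * ln K / PI - 4 * A * t1) with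
          ((2 * A * (ln K - 2 * PI * (t1 - sig)) + 2 * A * (ln K - 2 * PI * (t1 - - sig))) / (2 * PI))
          by (field; lra).
        unfold Rdiv. apply Rmult_le_compat_r; [left; apply Rinv_0_lt_compat; lra| lra]. }
      assert (hg4 : Rabs M + PI * Rabs mu <= g / 4 * t1).
      { assert (hh : 4 * (Rabs M + PI * Rabs mu) / g <= t1) by (unfold Tt in hT; lra).
        assert (hh2 : 4 * (Rabs M + PI * Rabs mu) / g * (g / 4) <= t1 * (g / 4))
          by (apply Rmult_le_compat_r; lra).
        replace (4 * (Rabs M + PI * Rabs mu) / g * (g / 4)) with (Rabs M + PI * Rabs mu) in hh2
          by (field; lra). lra. }
      assert (hbt : b ^ 2 * PI * t1 <= g / 4 * t1) by (apply Rmult_le_compat_r; lra).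
      pose proof (Rle_abs M).
      assert (e : b ^ 2 * (PI * (t1 - mu)) = b ^ 2 * PI * t1 - b ^ 2 * PI * mu) by ring.
      unfold M in *. unfold g in *. lra.
    - rewrite Rabs_left in hT |- * by exact ht.
      assert (hRm : Rm <= 0) by (apply RInt_FI_nonpos; nra).
      assert (hRp : Rp <= 0) by (apply RInt_FI_nonpos; nra).
      assert (hsum : (Rm + Rp) / (2 * PI) <= 0).
      { unfold Rdiv. assert (0 < / (2 * PI)) by (apply Rinv_0_lt_compat; lra). nra. }
      assert (hbt : b ^ 2 * PI * t1 <= 0).
      { assert (0 < b^2 * PI) by nra. nra. }
      assert (e : b ^ 2 * (PI * (t1 - mu)) = b ^ 2 * PI * t1 - b ^ 2 * PI * mu) by ring.
      assert (h6 : 6 * Rabs mu < - t1) by (unfold Tt in hT; lra).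
      assert (hh : (PI - g / 2) * t1 <= PI / 2 * t1) by (assert (0 <= (PI/2 - g/2) * (-t1)) by (apply Rmult_le_pos; lra); nra).
      nra. }
  rewrite <- exp_plus. rewrite Rmult_1_l. apply exp_mono.
  apply Rmult_le_reg_r with (b ^ 2); [exact hb2p|].
  replace ((Ref / b ^ 2 + PI * (t1 - mu)) * b ^ 2) with (Ref + b^2 * (PI * (t1 - mu))) by (field; lra).
  replace (- (g / 2 / b ^ 2) * Rabs t1 * b ^ 2) with (- (g / 2) * Rabs t1) by (field; lra).
  exact key.
Qed.
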